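(* Let $(\mathsf P,\mathcal O)$ be a semitopology and $p\in\mathsf P$. The following are equivalent: (1) $p$ is weakly regular, i.e. $p\in K(p)$; (2) $I(p)$ is a closed neighbourhood of $p$; (3) the set of closed neighbourhoods of $p$, ordered by subset inclusion, has a least element; (4) $I(p)$ is the least element of the set of closed neighbourhoods of $p$ ordered by subset inclusion.
   Context: A semitopology is a pair $(\mathsf P,\mathcal O)$ where $\mathsf P$ is a set and $\mathcal O\subseteq\mathcal P(\mathsf P)$ contains $\varnothing$ and $\mathsf P$ and is closed under arbitrary unions. Points $p,p'$ are intertwined when every open set containing $p$ intersects every open set containing $p'$; $I(p)$ is the set of points intertwined with $p$. $\mathrm{int}(R)$ is the union of all open sets contained in $R$, and $K(p)=\mathrm{int}(I(p))$. The closure $\overline{R}$ of $R$ is the set of points $q$ such that every open set containing $q$ intersects $R$; $C$ is closed when $C=\overline C$ (equivalently, $C$ is the complement of an open set). A closed neighbourhood of $p$ is a closed set $C$ with $p\in\mathrm{int}(C)$. *)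

(* Defs.v *)
From Stdlib Require Import Classical.

Set Implicit Arguments.

Definition subset {P : Type} (A B : P -> Prop) : Prop := forall x, A x -> B x.
Definition set_eq {P : Type} (A B : P -> Prop) : Prop := forall x, A x <-> B x.
Definition meets {P : Type} (A B : P -> Prop) : Prop := exists x, A x /\ B x.

(* A semitopology on the carrier P: a family of open sets containing the empty
   set and the full set, and closed under arbitrary unions (of arbitrary
   families of open sets, given as a predicate on sets). *)
Record semitopology (P : Type) := {
  opn : (P -> Prop) -> Prop;
  opn_empty : opn (fun _ => False);
  opn_full : opn (fun _ => True);
  opn_union : forall (F : (P -> Prop) -> Prop),
      (forall O, F O -> opn O) ->
      opn (fun x => exists O, F O /\ O x)
}.

Section Defs.
Variables (P : Type) (S : semitopology P).

Definition intertwined (p p' : P) : Prop :=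
  forall O O', opn S O -> opn S O' -> O p -> O' p' -> meets O O'.

Definition Iset (p : P) : P -> Prop := fun q => intertwined p q.

Definition interior (R : P -> Prop) : P -> Prop :=
  fun x => exists O, opn S O /\ subset O R /\ O x.

Definition Kset (p : P) : P -> Prop := interior (Iset p).

Definition closure (R : P -> Prop) : P -> Prop :=
  fun q => forall O, opn S O -> O q -> meets O R.

Definition is_closed (C : P -> Prop) : Prop := set_eq C (closure C).

Definition closed_nbhd (p : P) (C : P -> Prop) : Prop :=
  is_closed C /\ interior C p.

Definition weakly_regular (p : P) : Prop := Kset p p.

Definition least_closed_nbhd (p : P) (C : P -> Prop) : Prop :=
  closed_nbhd p C /\ forall D, closed_nbhd p D -> subset C D.

End Defs.

(* Main.v *)
Require Import Defs.
From Stdlib Require Import Classical.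

Lemma I_closed (P : Type) (S : semitopology P) (p : P) : is_closed S (Iset S p).
Proof.
  intro q; split.
  - intros Hq O HO Oq. exists q; auto.
  - intros Hq O O' HO HO' Op O'q.
    destruct (Hq O' HO' O'q) as [r [O'r Ir]].
    exact (Ir O O' HO HO' Op O'r).
Qed.

Lemma I_least (P : Type) (S : semitopology P) (p : P) D :
  closed_nbhd S p D -> subset (Iset S p) D.
Proof.
  intros [HC [O' [HO' [Hsub O'p]]]] q Iq.
  apply (proj2 (HC q)). intros O HO Oq.
  destruct (Iq O' O HO' HO O'p Oq) as [x [O'x Ox]].
  exists x; split; auto.
Qed.

Lemma least_I_int (P : Type) (S : semitopology P) (p : P) C :
  least_closed_nbhd S p C -> interior S (Iset S p) p.
Proof.
  intros [[HC [O [HO [Hsub Op]]]] Hl].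
  exists O; repeat split; auto.
  intros q Oq U V HU HV Up Vq.
  destruct (classic (meets U V)) as [H|H]; [exact H|exfalso].
  assert (Hcl : closed_nbhd S p (fun x => ~ V x)).
  { split.
    - intro x; split.
      + intros nVx W HW Wx. exists x; auto.
      + intros Hx Vx. destruct (Hx V HV Vx) as [y [Vy nVy]]. auto.
    - exists U; repeat split; auto.
      intros x Ux Vx. apply H. exists x; auto. }
  exact (Hl _ Hcl q (Hsub q Oq) Vq).
Qed.

Theorem proposition5p15 (P : Type) (S : semitopology P) (p : P) :
  (weakly_regular S p <-> closed_nbhd S p (Iset S p)) /\
  (closed_nbhd S p (Iset S p) <-> exists C, least_closed_nbhd S p C) /\
  ((exists C, least_closed_nbhd S p C) <-> least_closed_nbhd S p (Iset S p)).
Proof.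
  assert (A : closed_nbhd S p (Iset S p) -> least_closed_nbhd S p (Iset S p)).
  { intro H. split; auto. intros D HD. apply I_least; auto. }
  assert (B : (exists C, least_closed_nbhd S p C) -> closed_nbhd S p (Iset S p)).
  { intros [C HC]. split; [apply I_closed|]. eapply least_I_int; eauto. }
  split; [|split].
  - split.
    + intro H. split; [apply I_closed|exact H].
    + intros [_ H]; exact H.
  - split; auto. intro H; exists (Iset S p); auto.
  - split; auto. intro H; exists (Iset S p); auto.
Qed.
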